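(* For every $n\ge 1$ and every $i\in\{1,\dots,n-1\}$, $\mathrm{cap}_{\{i\},n}\circ\mathrm{j}_n=0=\mathrm{j}_n\circ\mathrm{cup}_{\{i\},n}$ in $\mathcal{TL}_0(\Bbbk)$. Equivalently, $\mathrm{j}_n$ is annihilated under both pre- and post-composition by the ideal spanned by Temperley–Lieb diagrams with fewer than $n$ through-strands.
   Context: $\Bbbk$ is a field. $\mathcal{TL}_0(\Bbbk)$ is the strict $\Bbbk$-linear monoidal category with objects $\mathbf 0,\mathbf 1,\dots$, $\mathbf m\otimes\mathbf n=\mathbf{m+n}$, generated by $\mathrm{cup}:\mathbf 0\to\mathbf 2$ and $\mathrm{cap}:\mathbf 2\to\mathbf 0$ subject to $(\mathrm{id}_{\mathbf 1}\otimes\mathrm{cap})\circ(\mathrm{cup}\otimes\mathrm{id}_{\mathbf 1})=0=(\mathrm{cap}\otimes\mathrm{id}_{\mathbf 1})\circ(\mathrm{id}_{\mathbf 1}\otimes\mathrm{cup})$ and $\mathrm{cap}\circ\mathrm{cup}=\mathrm{id}_{\mathbf 0}$. A Temperley–Lieb diagram is a nonzero morphism built from cup, cap and identities by $\otimes$ and $\circ$; its through-strands are the strands joining bottom to top. A subset $I\subseteq\{1,\dots,n\}$ is apt if $n\notin I$ and no two elements of $I$ are consecutive; $\mathrm{cap}_{I,n}:\mathbf n\to\mathbf{n-2|I|}$ has caps joining strands $i,i+1$ for $i\in I$ and through-strands elsewhere, $\mathrm{cup}_{I,n}$ is its vertical reflection (so $\mathrm{cap}_{\{i\},n}=\mathrm{id}_{\mathbf{i-1}}\otimes\mathrm{cap}\otimes\mathrm{id}_{\mathbf{n-i-1}}$,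 $\mathrm{cup}_{\{i\},n}=\mathrm{id}_{\mathbf{i-1}}\otimes\mathrm{cup}\otimes\mathrm{id}_{\mathbf{n-i-1}}$), and $\mathrm{j}_n=\sum_{I\text{ apt}}(-1)^{|I|}\mathrm{cup}_{I,n}\circ\mathrm{cap}_{I,n}$. *)

(* Defs.v *)
(* The Temperley-Lieb category TL_0(k) is presented
   syntactically: morphisms are (equivalence classes of) well-typed formal
   expressions built from id, cup, cap, composition, tensor product and
   k-linear combinations, modulo the congruence generated by the axioms of a
   strict k-linear monoidal category together with the defining relations
   of TL_0. *)
From HB Require Import structures.
From mathcomp Require Import all_boot all_algebra.
Set Implicit Arguments.
Unset Strict Implicit.
Unset Printing Implicit Defensive.
Import GRing.Theory.
Local Open Scope ring_scope.

Section TL0.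
Variable K : fieldType.

Inductive tm : Type :=
  | Id (n : nat)
  | Cup
  | Cap
  | Comp (f g : tm)
  | Tens (f g : tm)
  | Zero (m n : nat)
  | Add (f g : tm)
  | Scale (c : K) (f : tm).

Inductive wt : tm -> nat -> nat -> Prop :=
  | wt_id n : wt (Id n) n n
  | wt_cup : wt Cup 0 2
  | wt_cap : wt Cap 2 0
  | wt_comp f g a b c : wt g a b -> wt f b c -> wt (Comp f g) a c
  | wt_tens f g a b a' b' : wt f a b -> wt g a' b' -> wt (Tens f g) (a + a') (b + b')
  | wt_zero m n : wt (Zero m n) m n
  | wt_add f g m n : wt f m n -> wt g m n -> wt (Add f g) m n
  | wt_scale c f m n : wt f m n -> wt (Scale c f) m n.

Inductive eqv : tm -> tm -> Prop :=
  | eqv_refl f : eqv f f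
  | eqv_sym f g : eqv f g -> eqv g f
  | eqv_trans f g h : eqv f g -> eqv g h -> eqv f h
  | eqv_comp f f' g g' : eqv f f' -> eqv g g' -> eqv (Comp f g) (Comp f' g')
  | eqv_tens f f' g g' : eqv f f' -> eqv g g' -> eqv (Tens f g) (Tens f' g')
  | eqv_add f f' g g' : eqv f f' -> eqv g g' -> eqv (Add f g) (Add f' g')
  | eqv_scale c f f' : eqv f f' -> eqv (Scale c f) (Scale c f')
  | eqv_id_l f m n : wt f m n -> eqv (Comp (Id n) f) f
  | eqv_id_r f m n : wt f m n -> eqv (Comp f (Id m)) f
  | eqv_comp_assoc f g h a b c d : wt h a b -> wt g b c -> wt f c d ->
      eqv (Comp (Comp f g) h) (Comp f (Comp g h))
  | eqv_tens_id m n : eqv (Tens (Id m) (Id n)) (Id (m + n))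
  | eqv_tens_unit_l f m n : wt f m n -> eqv (Tens (Id 0) f) f
  | eqv_tens_unit_r f m n : wt f m n -> eqv (Tens f (Id 0)) f
  | eqv_tens_assoc f g h a b a' b' a'' b'' :
      wt f a b -> wt g a' b' -> wt h a'' b'' ->
      eqv (Tens (Tens f g) h) (Tens f (Tens g h))
  | eqv_interchange f f' g g' a b c a' b' c' :
      wt f' a b -> wt f b c -> wt g' a' b' -> wt g b' c' ->
      eqv (Comp (Tens f g) (Tens f' g')) (Tens (Comp f f') (Comp g g'))
  | eqv_add_assoc f g h m n : wt f m n -> wt g m n -> wt h m n ->
      eqv (Add (Add f g) h) (Add f (Add g h))
  | eqv_add_comm f g m n : wt f m n -> wt g m n -> eqv (Add f g) (Add g f)
  | eqv_add_zero f m n : wt f m n -> eqv (Add f (Zero m n)) f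
  | eqv_add_opp f m n : wt f m n -> eqv (Add f (Scale (-1) f)) (Zero m n)
  | eqv_scale_scale a b f m n : wt f m n ->
      eqv (Scale a (Scale b f)) (Scale (a * b) f)
  | eqv_scale_one f m n : wt f m n -> eqv (Scale 1 f) f
  | eqv_scale_addr a f g m n : wt f m n -> wt g m n ->
      eqv (Scale a (Add f g)) (Add (Scale a f) (Scale a g))
  | eqv_scale_addl a b f m n : wt f m n ->
      eqv (Scale (a + b) f) (Add (Scale a f) (Scale b f))
  | eqv_comp_addl f g h a b c : wt h a b -> wt f b c -> wt g b c ->
      eqv (Comp (Add f g) h) (Add (Comp f h) (Comp g h))
  | eqv_comp_addr f g h a b c : wt g a b -> wt h a b -> wt f b c ->
      eqv (Comp f (Add g h)) (Add (Comp f g) (Comp f h))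
  | eqv_comp_scalel c f g a b d : wt g a b -> wt f b d ->
      eqv (Comp (Scale c f) g) (Scale c (Comp f g))
  | eqv_comp_scaler c f g a b d : wt g a b -> wt f b d ->
      eqv (Comp f (Scale c g)) (Scale c (Comp f g))
  | eqv_tens_addl f g h a b a' b' : wt f a b -> wt g a b -> wt h a' b' ->
      eqv (Tens (Add f g) h) (Add (Tens f h) (Tens g h))
  | eqv_tens_addr f g h a b a' b' : wt f a b -> wt g a' b' -> wt h a' b' ->
      eqv (Tens f (Add g h)) (Add (Tens f g) (Tens f h))
  | eqv_tens_scalel c f g a b a' b' : wt f a b -> wt g a' b' ->
      eqv (Tens (Scale c f) g) (Scale c (Tens f g))
  | eqv_tens_scaler c f g a b a' b' : wt f a b -> wt g a' b' ->
      eqv (Tens f (Scale c g)) (Scale c (Tens f g))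
  | eqv_zigzag1 :
      eqv (Comp (Tens (Id 1) Cap) (Tens Cup (Id 1))) (Zero 1 1)
  | eqv_zigzag2 :
      eqv (Comp (Tens Cap (Id 1)) (Tens (Id 1) Cup)) (Zero 1 1)
  | eqv_loop : eqv (Comp Cap Cup) (Id 0).

(* Diagram with caps (resp. cups, if [g] = Cup) joining strands k+1,k+2 for
   each k with [P k] (0-based positions), scanning [len] strands from
   position [k]; through-strands elsewhere. *)
Fixpoint gens_from (g : tm) (P : nat -> bool) (k len : nat) {struct len} : tm :=
  match len with
  | 0 => Id 0
  | S l =>
      if P k then
        match l with
        | 0 => Id 1 (* never reached for apt subsets *)
        | S l' => Tens g (gens_from g P (k + 2) l')
        end
      else Tens (Id 1) (gens_from g P (k + 1) l)
  end.

(* Subsets I of {1,...,n} are encoded as I : {set 'I_n}, the ordinal k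
   standing for strand k+1. *)
Definition inI n (I : {set 'I_n}) (k : nat) : bool :=
  [exists i in I, nat_of_ord i == k].

(* apt: n \notin I and no two elements of I are consecutive. *)
Definition apt n (I : {set 'I_n}) : bool :=
  [forall i : 'I_n, (i \in I) ==> (i.+1 < n)%N] &&
  [forall i : 'I_n, forall j : 'I_n,
     ((i \in I) && (j \in I)) ==> (nat_of_ord j != i.+1)].

Definition capI n (I : {set 'I_n}) : tm := gens_from Cap (inI I) 0 n.
Definition cupI n (I : {set 'I_n}) : tm := gens_from Cup (inI I) 0 n.

Definition jn (n : nat) : tm :=
  foldr (fun (I : {set 'I_n}) acc => Add (Scale ((-1) ^+ #|I|) (Comp (cupI I) (capI I))) acc)
        (Zero n n) (enum [pred I : {set 'I_n} | apt I]).

Definition cap1 (n i : nat) : tm := Tens (Tens (Id (i - 1)) Cap) (Id (n - i - 1)).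
Definition cup1 (n i : nat) : tm := Tens (Tens (Id (i - 1)) Cup) (Id (n - i - 1)).

End TL0.

(* Main.v *)
Require Import Defs.
From mathcomp Require Import all_boot all_algebra zify.
From Stdlib Require Import Setoid Morphisms.
Set Implicit Arguments. Unset Strict Implicit. Unset Printing Implicit Defensive.
Import GRing.Theory.

Section S.
Variable K : fieldType.
Local Notation tm := (tm K).
Local Notation eqv := (@eqv K).
Local Notation wt := (@wt K).
Local Notation Id := (Defs.Id K).
Local Notation Cup := (Defs.Cup K).
Local Notation Cap := (Defs.Cap K).
Local Notation Zero := (Defs.Zero K).

Hint Resolve eqv_refl : core.
Instance eqv_Eq : Equivalence eqv.
Proof. split; [exact: eqv_refl| exact: eqv_sym| exact: eqv_trans]. Qed.
Instance Comp_P : Proper (eqv ==> eqv ==> eqv) (@Comp K).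
Proof. by move=> ? ? ? ? ? ?; apply: eqv_comp. Qed.
Instance Tens_P : Proper (eqv ==> eqv ==> eqv) (@Tens K).
Proof. by move=> ? ? ? ? ? ?; apply: eqv_tens. Qed.
Instance Add_P : Proper (eqv ==> eqv ==> eqv) (@Add K).
Proof. by move=> ? ? ? ? ? ?; apply: eqv_add. Qed.
Instance Scale_P c : Proper (eqv ==> eqv) (@Scale K c).
Proof. by move=> ? ? ?; apply: eqv_scale. Qed.

Lemma wt_eq f a b a' b' : wt f a b -> a = a' -> b = b' -> wt f a' b'.
Proof. by move=> H <- <-. Qed.
Lemma wt_comp' f g a b b' c : wt g a b -> wt f b' c -> b = b' -> wt (Comp f g) a c.
Proof. move=> H1 H2 E; subst; exact: wt_comp H1 H2. Qed.
Lemma wt_add' f g m n m' n' : wt f m n -> wt g m' n' -> m' = m -> n' = n -> wt (Add f g) m n.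
Proof. move=> H1 H2 E1 E2; subst; exact: wt_add. Qed.

Fixpoint gsq (g : tm) (s : seq bool) : tm :=
  match s with
  | [::] => Id 0
  | false :: s' => Tens (Id 1) (gsq g s')
  | true :: s' => match s' with [::] => Id 1 | _ :: s'' => Tens g (gsq g s'') end
  end.
Fixpoint out (s : seq bool) : nat :=
  match s with
  | [::] => 0
  | false :: s' => (out s').+1
  | true :: s' => match s' with [::] => 1 | _ :: s'' => out s'' end
  end.
Definition Gt (s : seq bool) : tm :=
  Scale ((-1) ^+ count id s)%R (Comp (gsq Cup s) (gsq Cap s)).

Lemma seq_ind2 (P : seq bool -> Prop) : P [::] -> (forall b, P [:: b]) ->
  (forall b c s, P s -> P (c :: s) -> P (b :: c :: s)) -> forall s, P s.
Proof.
move=> P0 P1 P2 s.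
suff: P s /\ forall b, P (b :: s) by case.
elim: s => [|c s [IH1 IH2]]; first by split.
by split=> // b; apply: P2.
Qed.

Lemma wt_gsq_cap s : wt (gsq Cap s) (size s) (out s).
Proof.
elim/seq_ind2: s => [|[]|[] c s IH1 IH2].
- exact: wt_id.
- exact: wt_id.
- exact: (wt_tens (wt_id _ 1) (wt_id _ 0)).
- by apply: (wt_eq (wt_tens (wt_cap K) IH1)).
- by apply: (wt_eq (wt_tens (wt_id _ 1) IH2)).
Qed.
Lemma wt_gsq_cup s : wt (gsq Cup s) (out s) (size s).
Proof.
elim/seq_ind2: s => [|[]|[] c s IH1 IH2].
- exact: wt_id.
- exact: wt_id.
- exact: (wt_tens (wt_id _ 1) (wt_id _ 0)).
- by apply: (wt_eq (wt_tens (wt_cup K) IH1)).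
- by apply: (wt_eq (wt_tens (wt_id _ 1) IH2)).
Qed.
Lemma wt_Gt s : wt (Gt s) (size s) (size s).
Proof. apply: wt_scale; apply: wt_comp (wt_gsq_cap s) (wt_gsq_cup s). Qed.

Ltac infer := lazymatch goal with
 | |- wt (Defs.Id _ _) _ _ => apply: wt_id
 | |- wt (Defs.Cup _) _ _ => apply: wt_cup
 | |- wt (Defs.Cap _) _ _ => apply: wt_cap
 | |- wt (Defs.Zero _ _ _) _ _ => apply: wt_zero
 | |- wt (Comp _ _) _ _ => eapply wt_comp'; [infer | infer | ]
 | |- wt (Tens _ _) _ _ => eapply wt_tens; [infer | infer]
 | |- wt (Add _ _) _ _ => eapply wt_add'; [infer | infer | | ]
 | |- wt (Scale _ _) _ _ => eapply wt_scale; infer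
 | |- _ => first [eassumption | eapply wt_gsq_cap | eapply wt_gsq_cup | eapply wt_Gt | match goal with H : forall _ : nat, wt _ _ _ |- _ => eapply H end]
 end.
Ltac tc := eapply wt_eq; [infer | .. ]; first [reflexivity | lia].
Ltac tcx := repeat eexists; repeat split; tc.

Definition ty f := exists a b, wt f a b.

Lemma idl f n : (exists m, wt f m n) -> eqv (Comp (Id n) f) f.
Proof. by case=> m H; apply: eqv_id_l H. Qed.
Lemma idr f m : (exists n, wt f m n) -> eqv (Comp f (Id m)) f.
Proof. by case=> n H; apply: eqv_id_r H. Qed.
Lemma compA f g h : (exists a b c d, [/\ wt h a b, wt g b c & wt f c d]) ->
  eqv (Comp (Comp f g) h) (Comp f (Comp g h)).
Proof. by case=> a [b [c [d [H1 H2 H3]]]]; apply: eqv_comp_assoc H1 H2 H3. Qed.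
Lemma tensA f g h : ty f -> ty g -> ty h -> eqv (Tens (Tens f g) h) (Tens f (Tens g h)).
Proof. by case=> ? [? H1] [? [? H2]] [? [? H3]]; apply: eqv_tens_assoc H1 H2 H3. Qed.
Lemma tunitl f : ty f -> eqv (Tens (Id 0) f) f.
Proof. by case=> ? [? H1]; apply: eqv_tens_unit_l H1. Qed.
Lemma tunitr f : ty f -> eqv (Tens f (Id 0)) f.
Proof. by case=> ? [? H1]; apply: eqv_tens_unit_r H1. Qed.
Lemma inter f f' g g' : (exists a b c, wt f' a b /\ wt f b c) -> (exists a b c, wt g' a b /\ wt g b c) ->
  eqv (Comp (Tens f g) (Tens f' g')) (Tens (Comp f f') (Comp g g')).
Proof. by case=> ? [? [? [H1 H2]]] [? [? [? [H3 H4]]]]; apply: eqv_interchange H1 H2 H3 H4. Qed.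
Lemma addA f g h m n : wt f m n -> wt g m n -> wt h m n -> eqv (Add (Add f g) h) (Add f (Add g h)).
Proof. exact: eqv_add_assoc. Qed.
Lemma addC f g m n : wt f m n -> wt g m n -> eqv (Add f g) (Add g f).
Proof. exact: eqv_add_comm. Qed.
Lemma comp_addl f g h : (exists a b c, [/\ wt h a b, wt f b c & wt g b c]) ->
  eqv (Comp (Add f g) h) (Add (Comp f h) (Comp g h)).
Proof. by case=> ? [? [? [H1 H2 H3]]]; apply: eqv_comp_addl H1 H2 H3. Qed.
Lemma comp_addr f g h : (exists a b c, [/\ wt g a b, wt h a b & wt f b c]) ->
  eqv (Comp f (Add g h)) (Add (Comp f g) (Comp f h)).
Proof. by case=> ? [? [? [H1 H2 H3]]]; apply: eqv_comp_addr H1 H2 H3. Qed.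
Lemma comp_scalel c f g : (exists a b d, wt g a b /\ wt f b d) ->
  eqv (Comp (Scale c f) g) (Scale c (Comp f g)).
Proof. by case=> ? [? [? [H1 H2]]]; apply: eqv_comp_scalel H1 H2. Qed.
Lemma comp_scaler c f g : (exists a b d, wt g a b /\ wt f b d) ->
  eqv (Comp f (Scale c g)) (Scale c (Comp f g)).
Proof. by case=> ? [? [? [H1 H2]]]; apply: eqv_comp_scaler H1 H2. Qed.
Lemma tens_addl f g h : (exists a b, wt f a b /\ wt g a b) -> ty h ->
  eqv (Tens (Add f g) h) (Add (Tens f h) (Tens g h)).
Proof. by case=> ? [? [H1 H2]] [? [? H3]]; apply: eqv_tens_addl H1 H2 H3. Qed.
Lemma tens_addr f g h : ty f -> (exists a b, wt g a b /\ wt h a b) ->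
  eqv (Tens f (Add g h)) (Add (Tens f g) (Tens f h)).
Proof. by case=> ? [? H1] [? [? [H2 H3]]]; apply: eqv_tens_addr H1 H2 H3. Qed.
Lemma tens_scalel c f g : ty f -> ty g -> eqv (Tens (Scale c f) g) (Scale c (Tens f g)).
Proof. by case=> ? [? H1] [? [? H2]]; apply: eqv_tens_scalel H1 H2. Qed.
Lemma tens_scaler c f g : ty f -> ty g -> eqv (Tens f (Scale c g)) (Scale c (Tens f g)).
Proof. by case=> ? [? H1] [? [? H2]]; apply: eqv_tens_scaler H1 H2. Qed.
Lemma scale_scale a b f : ty f -> eqv (Scale a (Scale b f)) (Scale (a * b) f).
Proof. by case=> ? [? H1]; apply: eqv_scale_scale H1. Qed.
Lemma scale_one f : ty f -> eqv (Scale 1 f) f.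
Proof. by case=> ? [? H1]; apply: eqv_scale_one H1. Qed.
Lemma scale_addr a f g : (exists m n, wt f m n /\ wt g m n) -> eqv (Scale a (Add f g)) (Add (Scale a f) (Scale a g)).
Proof. by case=> ? [? [H1 H2]]; apply: eqv_scale_addr H1 H2. Qed.

Lemma tens_id m n : eqv (Tens (Id m) (Id n)) (Id (m + n)).
Proof. exact: eqv_tens_id. Qed.
Lemma scale0 f m n : wt f m n -> eqv (Scale 0 f) (Zero m n).
Proof.
move=> H.
have H0 : wt (Scale 0 f) m n by constructor.
have E : eqv (Scale 0 f) (Add (Scale 0 f) (Scale 0 f)).
  by rewrite -{1}(addr0 (0:K)%R); apply: eqv_scale_addl H.
symmetry.
rewrite -(eqv_add_opp H0).
rewrite {1}E (addA H0 H0); last by constructor.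
rewrite (eqv_add_opp H0) (eqv_add_zero H0). reflexivity.
Qed.

Definition Zp f := eqv f (Scale 0 f).
Lemma Zp_eqv f g : eqv f g -> Zp g -> Zp f.
Proof. by rewrite /Zp => E; rewrite E. Qed.
Instance Zp_P : Proper (eqv ==> iff) Zp.
Proof. move=> f g E; split; [apply: Zp_eqv; symmetry|apply: Zp_eqv]; exact E. Qed.
Lemma Zp_zero m n : Zp (Zero m n).
Proof. by rewrite /Zp (scale0 (wt_zero _ m n)). Qed.
Lemma Zp_to f m n : wt f m n -> Zp f -> eqv f (Zero m n).
Proof. by move=> H ->; apply: scale0 H. Qed.
Lemma Zp_comp_r f g : Zp f -> (exists a b d, wt f a b /\ wt g b d) -> Zp (Comp g f).
Proof. by rewrite /Zp => E Ht; rewrite {1}E comp_scaler. Qed.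
Lemma Zp_comp_l f g : Zp g -> (exists a b d, wt f a b /\ wt g b d) -> Zp (Comp g f).
Proof. by rewrite /Zp => E Ht; rewrite {1}E comp_scalel. Qed.
Lemma Zp_tens_l f g : Zp f -> ty f -> ty g -> Zp (Tens f g).
Proof. by rewrite /Zp => E H1 H2; rewrite {1}E tens_scalel. Qed.
Lemma Zp_tens_r f g : Zp g -> ty f -> ty g -> Zp (Tens f g).
Proof. by rewrite /Zp => E H1 H2; rewrite {1}E tens_scaler. Qed.
Lemma Zp_add f g : Zp f -> Zp g -> (exists m n, wt f m n /\ wt g m n) -> Zp (Add f g).
Proof. by rewrite /Zp => E1 E2 H; rewrite {1}E1 {1}E2 scale_addr. Qed.
Lemma Zp_scale c f : Zp f -> ty f -> Zp (Scale c f).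
Proof.
rewrite /Zp => E H; rewrite {1}E !scale_scale ?mulr0 ?mul0r //.
Qed.

Lemma Zp_cancel X u m n : wt X m n -> wt u m n -> Zp u -> Zp (Add (Add X u) (Scale (-1) X)).
Proof.
move=> HX Hu Zu; apply: (Zp_eqv _ Zu).
rewrite (addC HX Hu) (addA Hu HX); last by constructor.
rewrite (eqv_add_opp HX) (eqv_add_zero Hu); reflexivity.
Qed.
Lemma Zp_cancel0 X m n : wt X m n -> Zp (Add X (Scale (-1) X)).
Proof. move=> HX; apply: (Zp_eqv _ (Zp_zero m n)); exact: eqv_add_opp HX. Qed.

Lemma tens_split f g : ty f -> ty g ->
  exists a b', eqv (Tens f g) (Comp (Tens f (Id b')) (Tens (Id a) g)).
Proof.
case=> a [b H1] [a' [b' H2]]; exists a, b'.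
rewrite inter ?idl ?idr; try tcx; reflexivity.
Qed.

Lemma tensI_comp a f g : (exists x y z, wt g x y /\ wt f y z) ->
  eqv (Tens (Id a) (Comp f g)) (Comp (Tens (Id a) f) (Tens (Id a) g)).
Proof. move=> H; rewrite inter ?idl; try tcx. reflexivity. case: H => x [y [z [H1 H2]]]; tcx. Qed.

Lemma compI_tens a f g : (exists x y z, wt g x y /\ wt f y z) ->
  eqv (Tens (Comp f g) (Id a)) (Comp (Tens f (Id a)) (Tens g (Id a))).
Proof. move=> H; rewrite inter ?idl; try tcx. reflexivity. case: H => x [y [z [H1 H2]]]; tcx. Qed.

Section Abs.
Variable S : nat -> tm.
Hypothesis HS : forall N, wt (S N) N N.
Hypothesis H0 : eqv (S 0) (Id 0).
Hypothesis H1 : eqv (S 1) (Id 1).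
Local Notation E := (Comp Cup Cap).
Hypothesis HR : forall N, eqv (S N.+2) (Add (Tens (Id 1) (S N.+1)) (Scale (-1) (Tens E (S N)))).

Lemma zig1Z f : (exists a, wt f a 1) -> Zp (Comp (Comp (Tens (Id 1) Cap) (Tens Cup (Id 1))) f).
Proof. move=> [a H]. apply: (Zp_eqv (eqv_comp (eqv_zigzag1 K) (eqv_refl f))). apply: Zp_comp_l. exact: Zp_zero. tcx. Qed.
Lemma zig2Z f : (exists a, wt f a 1) -> Zp (Comp (Comp (Tens Cap (Id 1)) (Tens (Id 1) Cup)) f).
Proof. move=> [a H]. apply: (Zp_eqv (eqv_comp (eqv_zigzag2 K) (eqv_refl f))). apply: Zp_comp_l. exact: Zp_zero. tcx. Qed.

Lemma ann0 m : Zp (Comp (Tens Cap (Id m)) (S m.+2)).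
Proof.
rewrite HR comp_addr ?comp_scaler; try tcx.
have EB : eqv (Comp (Tens Cap (Id m)) (Tens E (S m))) (Tens Cap (S m)).
  rewrite inter ?idl; try tcx.
  rewrite -compA ?(eqv_loop K) ?idl; try tcx. reflexivity.
rewrite EB.
case: m EB => [|m] EB.
  rewrite H1 tens_id (idr (f:= Tens Cap (Id 0))) ?H0; try tcx.
  apply: Zp_cancel0; tc.
rewrite HR tens_addr; try tcx. rewrite tens_scaler; try tcx.
rewrite comp_addr; try tcx. rewrite comp_scaler; try tcx.
rewrite -(@tensA (Id 1) (Id 1) (S m.+1)); try tcx. rewrite tens_id.
rewrite (@inter Cap (Id 2) (Id m.+1) (S m.+1)); try tcx.
rewrite idr; try tcx. rewrite idl; try tcx.
apply: Zp_cancel; try tc.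
apply: Zp_scale; last by tcx.
rewrite -(tens_id 1 m) -(@tensA Cap (Id 1) (Id m)); try tcx.
rewrite -(@tensA (Id 1) E (S m)); try tcx.
rewrite inter; try tcx.
apply: Zp_tens_l; try tcx.
rewrite tensI_comp; try tcx.
rewrite -compA; try tcx.
apply: zig2Z; tcx.
Qed.

Lemma ann1 m : Zp (Comp (Tens (Id 1) (Tens Cap (Id m))) (S m.+3)).
Proof.
rewrite HR comp_addr; try tcx. rewrite comp_scaler; try tcx.
apply: Zp_add; last by tcx.
  rewrite inter; try tcx. apply: Zp_tens_r; try tcx. exact: ann0.
apply: Zp_scale; last by tcx.
have ->: eqv (Tens E (S m.+1)) (Comp (Tens E (Id m.+1)) (Tens (Id 2) (S m.+1))).
  rewrite inter; try tcx. rewrite idl; try tcx. rewrite idr; try tcx. reflexivity.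
rewrite -(@tensA (Id 1) Cap (Id m)); try tcx.
rewrite -(tens_id 1 m) -(@tensA E (Id 1) (Id m)); try tcx.
rewrite -compA; try tcx.
apply: Zp_comp_l; last by tcx.
rewrite inter; try tcx.
apply: Zp_tens_l; try tcx.
rewrite compI_tens; try tcx.
rewrite -compA; try tcx.
apply: zig1Z; tcx.
Qed.

Lemma annk k m : Zp (Comp (Tens (Id k) (Tens Cap (Id m))) (S (k + m).+2)).
Proof.
suff: (forall m, Zp (Comp (Tens (Id k) (Tens Cap (Id m))) (S (k + m).+2))) /\
      (forall m, Zp (Comp (Tens (Id k.+1) (Tens Cap (Id m))) (S (k.+1 + m).+2))) by case.
elim: k {m} => [|k [IH1 IH2]].
  split=> m; last exact: ann1.
  rewrite tunitl; try tcx. exact: ann0.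
split=> //= m.
rewrite HR comp_addr; try tcx. rewrite comp_scaler; try tcx.
apply: Zp_add; last by tcx.
  rewrite -(tens_id 1 k.+1) (@tensA (Id 1) (Id k.+1)); try tcx.
  rewrite inter; try tcx. apply: Zp_tens_r; try tcx. exact: IH2.
apply: Zp_scale; last by tcx.
rewrite -(tens_id 2 k) (@tensA (Id 2) (Id k)); try tcx.
rewrite inter; try tcx. apply: Zp_tens_r; try tcx. exact: IH1.
Qed.

Lemma annF k m N : N = (k + 2 + m)%N -> eqv (Comp (Tens (Tens (Id k) Cap) (Id m)) (S N)) (Zero N (k + m)).
Proof.
move=> ->. apply: Zp_to; first tc.
rewrite tensA; try tcx.
have -> : (k + 2 + m = (k + m).+2)%N by lia.
exact: annk.
Qed.
End Abs.

Definition sumT n (l : seq tm) := foldr (@Add K) (Zero n n) l.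

Section Sums.
Variables (T : eqType) (G : T -> tm) (n : nat).
Lemma wt_sumG l : {in l, forall x, wt (G x) n n} -> wt (sumT n (map G l)) n n.
Proof.
elim: l => [|x l IH] Hl /=; first exact: wt_zero.
apply: wt_add; first by apply: Hl; rewrite inE eqxx.
by apply: IH => y Hy; apply: Hl; rewrite inE Hy orbT.
Qed.
Lemma sum_cat l1 l2 : {in l1 ++ l2, forall x, wt (G x) n n} ->
  eqv (sumT n (map G (l1 ++ l2))) (Add (sumT n (map G l1)) (sumT n (map G l2))).
Proof.
elim: l1 => [|x l1 IH] Hl /=.
  have H2 := wt_sumG Hl.
  symmetry; rewrite (addC (wt_zero _ n n) H2); exact: eqv_add_zero H2.
have Hx : wt (G x) n n by apply: Hl; rewrite inE eqxx.
have Hl' : {in l1 ++ l2, forall x, wt (G x) n n} by move=> y Hy; apply: Hl; rewrite inE Hy orbT.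
rewrite IH //. symmetry; apply: (addA Hx).
  apply: wt_sumG => y Hy; apply: Hl'; by rewrite mem_cat Hy.
apply: wt_sumG => y Hy; apply: Hl'; by rewrite mem_cat Hy orbT.
Qed.
Lemma sum_rem x l : x \in l -> {in l, forall x, wt (G x) n n} ->
  eqv (sumT n (map G l)) (Add (G x) (sumT n (map G (rem x l)))).
Proof.
elim: l => [|y l IH] //= Hx Hl.
case: eqP => [->|ne]; first reflexivity.
have Hy : wt (G y) n n by apply: Hl; rewrite inE eqxx.
have Hl' : {in l, forall x, wt (G x) n n} by move=> z Hz; apply: Hl; rewrite inE Hz orbT.
have Hx' : x \in l by move: Hx; rewrite inE; case: eqP => // E; case: ne.
have Hxx : wt (G x) n n by apply: Hl'.
have Hr : wt (sumT n (map G (rem x l))) n n by apply: wt_sumG => z Hz; apply: Hl'; apply: mem_rem Hz.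
rewrite /= IH //.
rewrite -(addA Hy Hxx Hr) (addC Hy Hxx) (addA Hxx Hy Hr). reflexivity.
Qed.
Lemma sum_perm l1 l2 : {in l2, forall x, wt (G x) n n} -> perm_eq l1 l2 ->
  eqv (sumT n (map G l1)) (sumT n (map G l2)).
Proof.
elim: l1 l2 => [|x l1 IH] l2 Hl2 Hp.
  by case: l2 Hp Hl2 => // y l2; move/perm_size.
have Hx : x \in l2 by rewrite -(perm_mem Hp) inE eqxx.
rewrite (sum_rem Hx Hl2) /=. apply: eqv_add; first reflexivity.
apply: IH; first by move=> z Hz; apply: Hl2; apply: mem_rem Hz.
by rewrite -(perm_cons x); apply: perm_trans Hp (perm_to_rem Hx).
Qed.
Lemma sum_eqv (H : T -> tm) l : (forall x, eqv (G x) (H x)) ->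
  eqv (sumT n (map G l)) (sumT n (map H l)).
Proof. move=> E; elim: l => [|x l IH] /=; [reflexivity| exact: eqv_add]. Qed.
Lemma sum_tens f a l : wt f a a -> {in l, forall x, wt (G x) n n} ->
  eqv (Tens f (sumT n (map G l))) (sumT (a + n) (map (fun x => Tens f (G x)) l)).
Proof.
move=> Hf; elim: l => [|x l IH] Hl /=.
  apply: Zp_to; first by apply: wt_tens Hf (wt_zero _ _ _).
  apply: Zp_tens_r; [exact: Zp_zero| by exists a, a | by exists n, n; apply: wt_zero].
have Hx : wt (G x) n n by apply: Hl; rewrite inE eqxx.
have Hl' : {in l, forall x, wt (G x) n n} by move=> z Hz; apply: Hl; rewrite inE Hz orbT.
rewrite tens_addr; first (apply: eqv_add; [reflexivity| exact: IH]).
  by exists a, a.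
by exists n, n; split=> //; apply: wt_sumG.
Qed.
Lemma sum_scale c l : {in l, forall x, wt (G x) n n} ->
  eqv (Scale c (sumT n (map G l))) (sumT n (map (fun x => Scale c (G x)) l)).
Proof.
elim: l => [|x l IH] Hl /=.
  apply: Zp_to; first by apply: wt_scale; apply: wt_zero.
  apply: Zp_scale; [exact: Zp_zero| by exists n, n; apply: wt_zero].
have Hx : wt (G x) n n by apply: Hl; rewrite inE eqxx.
have Hl' : {in l, forall x, wt (G x) n n} by move=> z Hz; apply: Hl; rewrite inE Hz orbT.
rewrite scale_addr; first (apply: eqv_add; [reflexivity| exact: IH]).
by exists n, n; split=> //; apply: wt_sumG.
Qed.
End Sums.

Fixpoint aptseqs n : seq (seq bool) :=
  match n with
  | 0 => [:: [::]]
  | m.+1 => match m with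
            | 0 => [:: [:: false]]
            | k.+1 => map (cons false) (aptseqs m) ++ map (fun s => true :: false :: s) (aptseqs k)
            end
  end.

Lemma size_aptseqs n s : s \in aptseqs n -> size s = n.
Proof.
suff: (forall s, s \in aptseqs n -> size s = n) /\ (forall s, s \in aptseqs n.+1 -> size s = n.+1).
  by case=> H _; apply: H.
elim: n {s} => [|n [IH1 IH2]].
  by split=> s; rewrite inE => /eqP ->.
split=> // s /=; rewrite mem_cat => /orP [] /mapP [t Ht ->] /=.
  by rewrite IH2.
by rewrite IH1.
Qed.

Lemma aptseqsE N : aptseqs N.+2 =
  map (cons false) (aptseqs N.+1) ++ map (fun s => true :: false :: s) (aptseqs N).
Proof. by []. Qed.

Definition T n := sumT n (map Gt (aptseqs n)).
Lemma wt_aptG n : {in aptseqs n, forall x, wt (Gt x) n n}.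
Proof. move=> s Hs; rewrite -(size_aptseqs Hs); exact: wt_Gt. Qed.
Lemma wt_T n : wt (T n) n n.
Proof. exact: wt_sumG (@wt_aptG n). Qed.

Local Notation E := (Comp Cup Cap).

Lemma Gt_false s : eqv (Gt (false :: s)) (Tens (Id 1) (Gt s)).
Proof.
rewrite /Gt /= add0n.
rewrite inter; try tcx. rewrite idl; try tcx. rewrite tens_scaler; try tcx. reflexivity.
Qed.
Lemma Gt_tf s : eqv (Gt (true :: false :: s)) (Scale (-1) (Tens E (Gt s))).
Proof.
rewrite /Gt /= add0n add1n exprS.
rewrite -scale_scale; try tcx. rewrite inter; try tcx. rewrite tens_scaler; try tcx. reflexivity.
Qed.

Lemma T_rec N : eqv (T N.+2) (Add (Tens (Id 1) (T N.+1)) (Scale (-1) (Tens E (T N)))).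
Proof.
rewrite /T aptseqsE.
have H1 := @wt_aptG N.+1. have H0 := @wt_aptG N.
rewrite sum_cat; last first.
  move=> s; rewrite mem_cat => /orP [] /mapP [t Ht ->].
    by apply: (wt_eq (wt_Gt _)); rewrite //= (size_aptseqs Ht).
  by apply: (wt_eq (wt_Gt _)); rewrite //= (size_aptseqs Ht).
apply: eqv_add.
  rewrite (@sum_tens _ Gt _ (Id 1) 1) //; last exact: wt_id.
  rewrite -map_comp. apply: sum_eqv => s /=; exact: Gt_false.
rewrite (@sum_tens _ Gt _ E 2) //; last by tc.
rewrite sum_scale; last by move=> s Hs; apply: wt_tens; [tc | exact: H0].
rewrite -map_comp. apply: sum_eqv => s /=; exact: Gt_tf.
Qed.

Lemma T0 : eqv (T 0) (Id 0).
Proof.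
rewrite /T /= (eqv_add_zero (wt_Gt [::])) /Gt /= expr0 scale_one; try tcx.
rewrite idl; try tcx. reflexivity.
Qed.
Lemma T1 : eqv (T 1) (Id 1).
Proof.
rewrite /T /= (eqv_add_zero (wt_Gt [:: false])) Gt_false /Gt /= expr0 scale_one; try tcx.
rewrite idl; try tcx. rewrite tens_id. reflexivity.
Qed.

Lemma annT k m N : N = (k + 2 + m)%N -> eqv (Comp (Tens (Tens (Id k) Cap) (Id m)) (T N)) (Zero N (k + m)).
Proof. exact: (annF wt_T T0 T1 T_rec). Qed.

Lemma gens_SS g P k l : gens_from g P k l.+2 =
  if P k then Tens g (gens_from g P (k+2) l) else Tens (Id 1) (gens_from g P (k+1) l.+1).
Proof. by []. Qed.

Lemma gens_gsq g s : forall k P, (forall j, j < size s -> P (k + j) = nth false s j) ->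
  gens_from g P k (size s) = gsq g s.
Proof.
elim/seq_ind2: s => [|b|b c s IH1 IH2] k P HP; first by [].
  rewrite /=; have := HP 0 isT; rewrite addn0 /= => ->; by case: b HP.
have Hb := HP 0 isT; rewrite addn0 /= in Hb.
rewrite [size _]/= gens_SS Hb.
case: b HP Hb => HP Hb.
  rewrite IH1 // => j Hj.
  have := HP j.+2 Hj; rewrite /= => <-; congr P; lia.
rewrite (IH2 (k+1) P) // => j Hj.
have := HP j.+1 Hj; rewrite /= => <-; congr P; lia.
Qed.

Section Bij.
Variable n : nat.
Definition toseq (I : {set 'I_n}) : seq bool := map (inI I) (iota 0 n).

Lemma inI_ge (I : {set 'I_n}) j : (n <= j)%N -> inI I j = false.
Proof.
move=> Hj; apply/existsP => [[i /andP [_ /eqP E]]].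
have := ltn_ord i; lia.
Qed.
Lemma inI_ord (I : {set 'I_n}) (i : 'I_n) : inI I i = (i \in I).
Proof.
apply/existsP/idP => [[x /andP [xI /eqP E]]|iI].
  by rewrite (_ : i = x) //; apply: val_inj.
by exists i; rewrite iI eqxx.
Qed.
Lemma size_toseq I : size (toseq I) = n.
Proof. by rewrite size_map size_iota. Qed.
Lemma nth_toseq I j : nth false (toseq I) j = inI I j.
Proof.
case: (ltnP j n) => Hj.
  by rewrite (nth_map 0) ?size_iota // nth_iota.
by rewrite nth_default ?size_toseq // inI_ge.
Qed.
Lemma count_toseq I : count id (toseq I) = #|I|.
Proof.
rewrite count_map -val_enum_ord count_map.
rewrite (eq_count (a2 := mem I)); last by move=> i /=; rewrite inI_ord.
by rewrite enumT cardE /enum_mem size_filter.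
Qed.
Lemma toseq_inj : injective toseq.
Proof.
move=> I J E; apply/setP => i.
by have := congr1 (fun s => nth false s i) E; rewrite /= !nth_toseq !inI_ord.
Qed.
End Bij.

Fixpoint aptb (s : seq bool) : bool :=
  match s with
  | [::] => true
  | false :: s' => aptb s'
  | true :: s' => match s' with [::] => false | true :: _ => false | false :: s'' => aptb s'' end
  end.
Definition aptP (s : seq bool) := forall j, nth false s j -> (j.+1 < size s) && ~~ nth false s j.+1.

Lemma aptbP s : aptb s <-> aptP s.
Proof.
rewrite /aptP; elim/seq_ind2: s => [|b|b c s IH1 IH2].
- by split=> // _ j; rewrite nth_nil.
- case: b; split=> //.
    by move/(_ 0 isT).
  by move=> _ [|j] //=; rewrite nth_nil.
case: b.
  case: c IH2 => IH2.
    by split=> // /(_ 0 isT).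
  rewrite /= IH1; split=> H.
    case=> [|[|j]] //= Hj.
    by have := H j Hj.
  by move=> j Hj; have := H j.+2 Hj.
rewrite [aptb _]/= IH2; split=> H.
  case=> [|j] //= Hj.
  by have := H j Hj.
by move=> j Hj; have := H j.+1 Hj.
Qed.

Lemma mem_aptseqs n s : (s \in aptseqs n) = (size s == n) && aptb s.
Proof.
elim: n {-2}n (leqnn n) s => [|N IH] n Hn s.
  by case: n Hn => // _; case: s.
case: n Hn => [|[|n]] Hn.
- by case: s.
- by case: s => [|[] [|? ?]].
rewrite aptseqsE mem_cat.
have IH1 := IH n.+1 Hn. have IH0 := IH n (ltnW Hn).
case: s => [|[] s].
- by apply/negP => /orP [] /mapP [].
- apply/orP/andP.
    case=> /mapP [t Ht E] //; case: E => ->.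
    by move: Ht; rewrite IH0 => /andP [/eqP Hs Hb]; rewrite /= Hs Hb.
  case: s => [|[] s] //= [Hs Hb] //; right; apply/mapP; exists s => //.
  by rewrite !eqSS in Hs; rewrite IH0 Hs.
- rewrite /=; apply/orP/andP.
    case=> /mapP [t Ht E] //; case: E => ->.
    by move: Ht; rewrite IH1 => /andP [/eqP Hs Hb]; rewrite /= Hs Hb.
  by case=> Hs Hb; left; apply/mapP; exists s => //; rewrite IH1 -eqSS Hs.
Qed.

Lemma uniq_aptseqs n : uniq (aptseqs n).
Proof.
elim: n {-2}n (leqnn n) => [|N IH] n Hn.
  by case: n Hn.
case: n Hn => [|[|n]] Hn //.
rewrite aptseqsE cat_uniq; apply/and3P; split.
- rewrite map_inj_uniq; first exact: IH.
  by move=> s t [].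
- apply/hasP => [[s /mapP [t _ ->]]]; rewrite /= => /mapP [u _] //.
- rewrite map_inj_uniq; first by apply: IH; exact: ltnW.
  by move=> s t [].
Qed.

Section Bij2.
Variable n : nat.
Lemma apt_toseq (I : {set 'I_n}) : apt I = aptb (toseq I).
Proof.
apply/idP/idP.
  move/andP => [/forallP H1 /forallP H2]; apply/aptbP => j.
  rewrite !nth_toseq size_toseq => /existsP [i /andP [iI /eqP ij]]; subst j.
  apply/andP; split; first exact: (implyP (H1 i) iI).
  apply/negP => /existsP [i' /andP [i'I /eqP E]].
  by have := implyP (forallP (H2 i) i'); rewrite iI i'I E eqxx => /(_ isT).
move/aptbP => H; apply/andP; split; apply/forallP => i.
  by apply/implyP => iI; have := H i; rewrite nth_toseq inI_ord iI size_toseq => /(_ isT) /andP [].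
apply/forallP => j; apply/implyP => /andP [iI jI]; apply/eqP => E.
have := H i; rewrite !nth_toseq inI_ord iI size_toseq -E inI_ord jI => /(_ isT) /andP [] //.
Qed.

Lemma mem_toseqs s : (s \in map (@toseq n) (enum [pred I : {set 'I_n} | apt I])) = (size s == n) && aptb s.
Proof.
apply/mapP/andP.
  case=> I HI ->; move: HI; rewrite mem_enum /= => HI.
  by split; [rewrite size_toseq | rewrite -apt_toseq]...
case=> /eqP Hs Hb.
have E : toseq [set i : 'I_n | nth false s i] = s.
  apply: (eq_from_nth (x0 := false)); first by rewrite size_toseq.
  move=> j; rewrite size_toseq => Hj.
  by rewrite nth_toseq (inI_ord _ (Ordinal Hj)) inE.
exists [set i : 'I_n | nth false s i] => //.
by rewrite mem_enum inE apt_toseq E.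
Qed.

Lemma perm_toseqs : perm_eq (map (@toseq n) (enum [pred I : {set 'I_n} | apt I])) (aptseqs n).
Proof.
apply: uniq_perm.
- rewrite map_inj_uniq ?enum_uniq //; exact: toseq_inj.
- exact: uniq_aptseqs.
- by move=> s; rewrite mem_toseqs mem_aptseqs.
Qed.

Lemma jn_T : eqv (jn K n) (T n).
Proof.
have -> : jn K n = sumT n (map Gt (map (@toseq n) (enum [pred I : {set 'I_n} | apt I]))).
  rewrite /jn /sumT !foldr_map.
  elim: (enum _) => //= I l ->; congr Add.
  rewrite /Gt count_toseq /cupI /capI.
  have Hg g : gens_from g (inI I) 0 n = gsq g (toseq I).
    have := @gens_gsq g (toseq I) 0 (inI I); rewrite size_toseq; apply.
    by move=> j _; rewrite nth_toseq.
  by rewrite !Hg.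
apply: sum_perm; first exact: wt_aptG.
exact: perm_toseqs.
Qed.
End Bij2.

Fixpoint refl (f : tm) : tm :=
  match f with
  | Defs.Id n => Id n
  | Defs.Cup => Cap
  | Defs.Cap => Cup
  | Comp f g => Comp (refl g) (refl f)
  | Tens f g => Tens (refl f) (refl g)
  | Defs.Zero m n => Zero n m
  | Add f g => Add (refl f) (refl g)
  | Scale c f => Scale c (refl f)
  end.

Lemma wt_refl f a b : wt f a b -> wt (refl f) b a.
Proof. elim=> /=; intros; econstructor; eauto. Qed.

Lemma eqv_reflm f g : eqv f g -> eqv (refl f) (refl g).
Proof.
elim=> /=; intros; first [ by (econstructor; eauto using wt_refl)
  | by symmetry; econstructor; eauto using wt_refl
  | by apply: eqv_trans; eauto
  | exact: eqv_zigzag2 | exact: eqv_zigzag1 ].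
Qed.

Lemma refl_gsq s : refl (gsq Cap s) = gsq Cup s /\ refl (gsq Cup s) = gsq Cap s.
Proof.
elim/seq_ind2: s => [|[]|[] c s [IH1 IH1'] [IH2 IH2']] //=.
- by rewrite IH1 IH1'.
- by move: IH2 IH2' => /= -> ->.
Qed.

Lemma refl_T n : refl (T n) = T n.
Proof.
rewrite /T /sumT; elim: (aptseqs n) => //= s l ->.
by rewrite /Gt /= (proj1 (refl_gsq s)) (proj2 (refl_gsq s)).
Qed.
End S.

Theorem mainTheorem6 (K : fieldType) (n i : nat) :
  (1 <= n)%N -> (1 <= i)%N -> (i <= n - 1)%N ->
  eqv (Comp (cap1 K n i) (jn K n)) (Zero K n (n - 2)) /\
  eqv (Comp (jn K n) (cup1 K n i)) (Zero K (n - 2) n).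
Proof.
move=> Hn Hi Hin.
have E0 : eqv (Comp (cap1 K n i) (T K n)) (Zero K n (n - 2)).
  rewrite /cap1.
  have -> : (n - 2 = (i - 1) + (n - i - 1))%N by lia.
  apply: annT; lia.
split.
  exact: eqv_trans (eqv_comp (eqv_refl _) (jn_T K n)) E0.
have := eqv_reflm E0; rewrite [refl _]/= refl_T => H.
exact: eqv_trans (eqv_comp (jn_T K n) (eqv_refl _)) H.
Qed.
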